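(* If $d_1-p_1\le d_2-p_2\le\cdots\le d_n-p_n$, then first-fit satisfies $FF(I)<2\,OPT(I)$ for every such instance $I$ with $OPT(I)\ge2$ (and $FF(I)=1$ when $OPT(I)=1$); in particular first-fit is a 2-approximation on this class. The bound is tight: for every integer $k\ge1$, the instance with $3k+1$ jobs $a_1,\dots,a_k$ with $(p,d)=(k,2k)$, $b_1,\dots,b_k$ with $(p,d)=(1,k+1)$, $c_1,\dots,c_{k+1}$ with $(p,d)=(k+1,2k+1)$, in the fixed order $a_1,b_1,\dots,a_k,b_k,c_1,\dots,c_{k+1}$ (all slacks equal $k$), has $OPT(I)=k+1$ and $FF(I)=2k+1$.
   Context: Fixed order scheduling with deadlines: there are jobs $J=\{1,\dots,n\}$, each job $j$ having a processing time $p_j\in\mathbb{N}$, $p_j>0$, and a deadline $d_j\in\mathbb{N}$ with $d_j\ge p_j$; the slack of job $j$ is $d_j-p_j$. All jobs are released at time $0$; job $j$ precedes job $k$ in the fixed order iff $j<k$. A schedule $\tau:J\to\{1,\dots,n\}$ assigns jobs to identical machines; each machine processes its jobs in the fixed order from time $0$ without idle time or preemption, so job $j$ completes at $\sum_{k\le j,\tau(k)=\tau(j)}p_k$; it is feasible if every job completes by its deadline. $OPT(I)$ is the minimum number of machines used by a feasible schedule. First-fit (FF): machines indexed $1,2,\dots$; process jobs in the fixed order and assign each job $j$ to the smallest-index machine whose current load (sum of processing times already assigned) plus $p_j$ is at most $d_j$; $FF(I)$ is the number of nonempty machines. *)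

(* Defs.v *)
From mathcomp Require Import all_boot.
Set Implicit Arguments. Unset Strict Implicit. Unset Printing Implicit Defensive.

(* Jobs are 'I_n, in the fixed order 0 < 1 < ... < n-1; machines are 'I_n. *)

Definition completion n (p : 'I_n -> nat) (tau : 'I_n -> 'I_n) (j : 'I_n) : nat :=
  \sum_(k < n | (k <= j) && (tau k == tau j)) p k.

Definition feasible n (p d : 'I_n -> nat) (tau : {ffun 'I_n -> 'I_n}) : bool :=
  [forall j, completion p tau j <= d j].

Definition machines_used n (tau : {ffun 'I_n -> 'I_n}) : nat :=
  #|[set tau j | j in 'I_n]|.

(* OPT: minimum number of machines over feasible schedules
   (n is an upper bound, attained by one-job-per-machine when d_j >= p_j). *)
Definition OPT n (p d : 'I_n -> nat) : nat :=
  \big[minn/n]_(tau : {ffun 'I_n -> 'I_n} | feasible p d tau) machines_used tau.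

(* First fit: loads is the list of current machine loads (machine 1 first).
   Job (pj,dj) goes to the first machine with load + pj <= dj, or a new one. *)
Definition ff_step (loads : seq nat) (pj dj : nat) : seq nat :=
  let i := find (fun l => l + pj <= dj) loads in
  if i < size loads then set_nth 0 loads i (nth 0 loads i + pj)
  else rcons loads pj.

Definition ff_loads n (p d : 'I_n -> nat) : seq nat :=
  foldl (fun loads j => ff_step loads (p j) (d j)) [::] (enum 'I_n).

Definition FF n (p d : 'I_n -> nat) : nat := size (ff_loads p d).

(* Tight instance with 3k+1 jobs: a_1,b_1,...,a_k,b_k,c_1,...,c_{k+1}. *)
Definition tight_p (k j : nat) : nat :=
  if j < 2 * k then (if ~~ odd j then k else 1) else k.+1.
Definition tight_d (k j : nat) : nat :=
  if j < 2 * k then (if ~~ odd j then 2 * k else k.+1) else 2 * k + 1.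

(* Main.v *)
Require Import Defs.
From mathcomp Require Import all_boot zify.
Set Implicit Arguments. Unset Strict Implicit. Unset Printing Implicit Defensive.

Definition ffa_step n (p d : 'I_n -> nat) (st : seq nat * ('I_n -> nat)) (j : 'I_n) :=
  (ff_step st.1 (p j) (d j),
   fun x => if x == j then find (fun l => l + p j <= d j) st.1 else st.2 x).

Lemma ffa_fst n (p d : 'I_n -> nat) s st :
  (foldl (ffa_step p d) st s).1 = foldl (fun L j => ff_step L (p j) (d j)) st.1 s.
Proof. by elim: s st => [|x s IH] st //=; rewrite IH. Qed.

Definition Inv n (p d : 'I_n -> nat) (s : seq 'I_n) (st : seq nat * ('I_n -> nat)) : Prop :=
 [/\ forall k, nth 0 st.1 k = \sum_(i <- s | st.2 i == k) p i,
     forall i, i \in s -> st.2 i < size st.1 &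
     forall k, k < size st.1 -> exists o, [/\ o \in s, st.2 o = k &
        forall k', k' < k -> d o - p o < \sum_(i <- s | (st.2 i == k') && (i < o)) p i]].

Lemma sum_rcons n (s : seq 'I_n) (x : 'I_n) (P : pred 'I_n) (F : 'I_n -> nat) :
  \sum_(i <- rcons s x | P i) F i = \sum_(i <- s | P i) F i + (if P x then F x else 0).
Proof. by rewrite big_rcons. Qed.

Lemma sum_eq_in n (s : seq 'I_n) (P Q : pred 'I_n) (F : 'I_n -> nat) :
  {in s, P =1 Q} -> \sum_(i <- s | P i) F i = \sum_(i <- s | Q i) F i.
Proof.
move=> H; rewrite [LHS]big_seq_cond [RHS]big_seq_cond; apply: eq_bigl => i.
by case: (boolP (i \in s)) => //= Hi; rewrite H.
Qed.

Lemma Inv_step n (p d : 'I_n -> nat) s st (x : 'I_n) :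
  (forall j, p j <= d j) -> Inv p d s st -> (forall y, y \in s -> y < x) -> Inv p d (rcons s x) (ffa_step p d st x).
Proof.
move=> Hpd; case: st => L a; rewrite /Inv /= => -[H1 H2 H3] Hlt.
rewrite /ffa_step /ff_step /=.
set idx := find _ L.
have Ha : {in s, (fun y => if y == x then idx else a y) =1 a}.
  move=> y Hy /=; case: eqP => // Eyx; have := Hlt y Hy; by rewrite Eyx ltnn.
have Hsz : idx <= size L by apply: find_size.
have HS : forall (P : nat -> 'I_n -> bool),
  \sum_(i <- s | P (if i == x then idx else a i) i) p i = \sum_(i <- s | P (a i) i) p i.
  by move=> P; apply: sum_eq_in => y Hy /=; rewrite Ha.
case: ltnP => Hidx.
- split => /=.
  + move=> k; rewrite sum_rcons eqxx (HS (fun v _ => v == k)).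
    rewrite nth_set_nth /= -H1; case: eqP => [->|/eqP Hk]; first by rewrite eqxx.
    by rewrite eq_sym (negbTE Hk) addn0.
  + move=> i; rewrite mem_rcons inE size_set_nth; case: eqP => [->|Hix] /= Hi.
      lia.
    have := H2 i Hi; lia.
  + move=> k; rewrite size_set_nth => Hk.
    have [o [Ho Hao Hsum]] := H3 k ltac:(lia).
    exists o; split.
    * by rewrite mem_rcons inE Ho orbT.
    * by rewrite Ha.
    * move=> k' Hk'; rewrite sum_rcons.
      have -> : (x < o) = false by have := Hlt o Ho; lia.
      rewrite andbF addn0 (HS (fun v i => (v == k') && (i < o))).
      exact: Hsum.
- have Eidx : idx = size L by apply/eqP; rewrite eqn_leq Hsz Hidx.
  split => /=.
  + move=> k; rewrite sum_rcons eqxx (HS (fun v _ => v == k)).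
    rewrite nth_rcons -H1 Eidx; case: ltnP => Hk.
      by rewrite (_ : (size L == k) = false) ?addn0 //; apply/eqP; lia.
    by rewrite nth_default // add0n eq_sym.
  + move=> i; rewrite mem_rcons inE size_rcons; case: eqP => [->|Hix] /= Hi.
      lia.
    have := H2 i Hi; lia.
  + move=> k; rewrite size_rcons ltnS leq_eqVlt => /orP [/eqP Ek| Hk].
    * exists x; split.
      -- by rewrite mem_rcons inE eqxx.
      -- by rewrite eqxx Eidx Ek.
      -- move=> k' Hk'; rewrite sum_rcons ltnn andbF addn0.
         rewrite (HS (fun v i => (v == k') && (i < x))).
         rewrite (sum_eq_in (Q := fun i => a i == k')); last first.
           by move=> y Hy /=; rewrite Hlt // andbT.
         rewrite -H1.
         have := before_find 0 (a := fun l => l + p x <= d x) (s := L) (i := k').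
         rewrite -/idx Eidx; move=> /(_ ltac:(lia)) /negbT; rewrite -ltnNge. have := Hpd x; lia.
    * have [o [Ho Hao Hsum]] := H3 k Hk.
      exists o; split.
      -- by rewrite mem_rcons inE Ho orbT.
      -- by rewrite Ha.
      -- move=> k' Hk'; rewrite sum_rcons.
         have -> : (x < o) = false by have := Hlt o Ho; lia.
         rewrite andbF addn0 (HS (fun v i => (v == k') && (i < o))).
         exact: Hsum.
Qed.

Lemma Inv_all n (p d : 'I_n -> nat) : (forall j, p j <= d j) ->
  forall s : seq 'I_n, map val s = iota 0 (size s) ->
  Inv p d s (foldl (ffa_step p d) ([::], fun _ => 0) s).
Proof.
move=> Hpd; elim/last_ind => [|s x IH].
  by move=> _; split => //= k; rewrite nth_nil big_nil.
rewrite map_rcons size_rcons -addn1 iotaD add0n cats1 => /rcons_inj [Hs Hx].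
rewrite foldl_rcons; apply: Inv_step => //; first exact: IH.
move=> y Hy; have : val y \in map val s by apply: map_f.
by rewrite Hs mem_iota -Hx add0n.
Qed.

Lemma Inv_enum n (p d : 'I_n -> nat) : (forall j, p j <= d j) ->
  let st := foldl (ffa_step p d) ([::], fun _ => 0) (enum 'I_n) in
  Inv p d (enum 'I_n) st /\ size st.1 = FF p d.
Proof.
move=> Hpd st; split.
  by apply: Inv_all => //; rewrite val_enum_ord size_enum_ord.
by rewrite /st ffa_fst.
Qed.

Lemma exch n M (a : 'I_n -> nat) (R : pred 'I_M) (P : 'I_M -> 'I_n -> bool)
  (F : 'I_n -> nat) (Q : pred 'I_n) :
  (forall (k : 'I_M) i, a i = k -> R k -> P k i -> Q i) ->
  \sum_(k < M | R k) \sum_(i | (a i == k) && P k i) F i <= \sum_(i | Q i) F i.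
Proof.
move=> H.
rewrite big_mkcond /=.
rewrite (eq_bigr (fun k : 'I_M => \sum_i (if (a i == k) && (R k && P k i) then F i else 0))); last first.
  move=> k _; case: (boolP (R k)) => Rk /=.
    by rewrite big_mkcond.
  by rewrite big1 // => i _; rewrite andbF.
rewrite exchange_big /= [X in _ <= X]big_mkcond /=; apply: leq_sum => i _.
case: (boolP (Q i)) => Qi.
- apply: (@leq_trans (\sum_(k < M) if a i == k then F i else 0)).
    apply: leq_sum => k _; case: (a i == k) => //=; case: (_ && _) => //.
  rewrite -big_mkcond /=; case: (ltnP (a i) M) => Ha.
  + by rewrite (big_pred1 (Ordinal Ha)) // => k; rewrite /= -val_eqE /= eq_sym.
  + rewrite big_pred0 // => k; apply/negbTE; apply/eqP => Ek; move: (ltn_ord k); lia.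
- rewrite big1 // => k _; case: ifP => // /andP [/eqP Ha /andP [Rk Pk]].
  by have := H _ _ Ha Rk Pk; rewrite (negbTE Qi).
Qed.

Definition NL n (tau : {ffun 'I_n -> 'I_n}) (j i : 'I_n) : bool :=
  [exists i' : 'I_n, (i < i') && (i' <= j) && (tau i' == tau i)].

Lemma nonlast_bound n (p d : 'I_n -> nat) (tau : {ffun 'I_n -> 'I_n}) (j : 'I_n) :
  (forall i k : 'I_n, i <= k -> d i - p i <= d k - p k) -> feasible p d tau ->
  \sum_(i | NL tau j i) p i <= machines_used tau * (d j - p j).
Proof.
move=> Hs Hf.
rewrite (partition_big tau (mem [set tau x | x in 'I_n])) /=; last first.
  by move=> i _; apply: imset_f.
rewrite /machines_used -sum_nat_const; apply: leq_sum => M _.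
case: (boolP [exists i, NL tau j i && (tau i == M)]) => [/existsP [i0 /andP [NLi0 /eqP Ti0]] | Hno]; last first.
  rewrite big_pred0 // => i; apply/negbTE; apply: contra Hno => Hi; by apply/existsP; exists i.
have P0 : (i0 <= j) && (tau i0 == M).
  move: NLi0 => /existsP [i' /andP [/andP [H1 H2] _]]; rewrite Ti0 eqxx andbT; lia.
case: (@arg_maxnP _ i0 (fun i : 'I_n => (i <= j) && (tau i == M)) (fun i : 'I_n => nat_of_ord i) P0) => l /andP [Hlj /eqP Hl] Hmax.
apply: (@leq_trans (\sum_(i : 'I_n | (i < l) && (tau i == tau l)) p i)).
  rewrite big_mkcond [X in _ <= X]big_mkcond; apply: leq_sum => i _.
  case: (boolP (NL tau j i && (tau i == M))) => // /andP [/existsP [i' /andP [/andP [Hii' Hi'j] /eqP Ti']] /eqP TiM].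
  have : i' <= l by apply: Hmax; rewrite Hi'j Ti' TiM eqxx.
  move=> Hi'l; have -> : i < l by lia.
  by rewrite TiM Hl eqxx.
have Hc := (forallP Hf) l; rewrite /completion (bigD1 l) /= in Hc; last by rewrite leqnn eqxx.
have E : \sum_(i : 'I_n | (i <= l) && (tau i == tau l) && (i != l)) p i = \sum_(i : 'I_n | (i < l) && (tau i == tau l)) p i.
  apply: eq_bigl => i; rewrite ltn_neqAle -val_eqE /=.
  by case: (i <= l); case: (i != l); rewrite /= ?andbT ?andbF.
rewrite E in Hc.
have := Hs l j Hlj; lia.
Qed.

Lemma last_card n (tau : {ffun 'I_n -> 'I_n}) (j : 'I_n) :
  #|[set i : 'I_n | (i <= j) && ~~ NL tau j i]| <= machines_used tau.
Proof.
rewrite -(card_in_imset (f := tau)).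
  apply: subset_leq_card; apply/subsetP => x /imsetP [i _ ->]; exact: imset_f.
move=> a b; rewrite !inE => /andP [Haj Ha] /andP [Hbj Hb] Eab.
case: (ltngtP a b) => [Hab|Hab|/val_inj //].
- by case/negP: Ha; apply/existsP; exists b; rewrite Hab Hbj Eab eqxx.
- by case/negP: Hb; apply/existsP; exists a; rewrite Hab Haj Eab eqxx.
Qed.

Lemma count_arg n (p d : 'I_n -> nat) (tau : {ffun 'I_n -> 'I_n}) (a : 'I_n -> nat) (j : 'I_n) M :
  (forall i k : 'I_n, i <= k -> d i - p i <= d k - p k) -> feasible p d tau ->
  (forall k', k' < M -> d j - p j < \sum_(i | (a i == k') && (i < j)) p i) ->
  M.+1 < 2 * machines_used tau.
Proof.
move=> Hs Hf Hg.
set q := machines_used tau. set s := d j - p j.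
set Last := fun i : 'I_n => (i <= j) && ~~ NL tau j i.
set bad := fun k : 'I_M => [exists i : 'I_n, [&& a i == k, i < j & Last i]].
have HG : \sum_(k < M | ~~ bad k) s.+1 <= q * s.
  apply: (leq_trans _ (nonlast_bound j Hs Hf)).
  apply: (@leq_trans (\sum_(k < M | ~~ bad k) \sum_(i | (a i == k) && (i < j)) p i)).
    by apply: leq_sum => k _; exact: Hg (ltn_ord k).
  apply: (exch (P := fun _ i => i < j)) => k i Hai Hk Hij.
  case: (boolP (NL tau j i)) => // HN; case/negP: Hk; apply/existsP; exists i.
  rewrite /Last HN Hai eqxx Hij andbT /=; lia.
have HB : \sum_(k < M | bad k) 1 <= q.-1.
  apply: (@leq_trans (\sum_(k < M | bad k) \sum_(i | (a i == k) && (Last i && (i < j))) 1)).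
    apply: leq_sum => k /existsP [i /and3P [Hai Hij HL]].
    by rewrite (bigD1 i) //= Hai HL Hij.
  apply: (@leq_trans (\sum_(i | Last i && (i < j)) 1)).
    by apply: (exch (P := fun _ i => Last i && (i < j))).
  have -> : \sum_(i | Last i && (i < j)) 1 = #|[set i | Last i && (i < j)]|.
    by rewrite -sum1_card; apply: eq_bigl => i; rewrite inE.
  have HL := last_card tau j.
  have Hj : j \in [set i : 'I_n | (i <= j) && ~~ NL tau j i].
    rewrite inE leqnn /=; apply/existsP => -[i' /andP [/andP [H1 H2] _]]; lia.
  rewrite (cardsD1 j) Hj /= in HL.
  apply: (@leq_trans #|[set i : 'I_n | (i <= j) && ~~ NL tau j i] :\ j|); last first.
    by move: HL; rewrite add1n -/q; case: (q).
  apply: subset_leq_card; apply/subsetP => i; rewrite !inE /Last => /andP [/andP [H1 H2] H3].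
  rewrite H1 H2 andbT andbT; apply/eqP => E; rewrite E in H3; lia.
have HM : \sum_(k < M | bad k) 1 + \sum_(k < M | ~~ bad k) 1 = M.
  have E : \sum_(k < M) 1 = M by rewrite sum1_card card_ord.
  by rewrite -[X in _ = X]E [RHS](bigID bad).
have Hc : \sum_(k < M | ~~ bad k) s.+1 = (\sum_(k < M | ~~ bad k) 1) * s.+1.
  by rewrite big_distrl /=; apply: eq_bigr => k _; rewrite mul1n.
have q1 : 0 < q.
  rewrite /q /machines_used card_gt0; apply/set0Pn; exists (tau j); exact: imset_f.
rewrite Hc in HG.
move: HB HG HM q1; set G := \sum_(k < M | ~~ bad k) 1; set B := \sum_(k < M | bad k) 1.
move=> HB HG HM q1.
have Hq : G < q.
  rewrite ltnNge; apply/negP => HqG.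
  have := leq_trans (leq_mul HqG (leqnn s.+1)) HG; rewrite mulnS; lia.
lia.
Qed.

Lemma core n (p d : 'I_n -> nat) (tau : {ffun 'I_n -> 'I_n}) :
  (forall j, p j <= d j) ->
  (forall i k : 'I_n, i <= k -> d i - p i <= d k - p k) -> feasible p d tau ->
  0 < FF p d -> FF p d < 2 * machines_used tau.
Proof.
move=> Hpd Hs Hf Hpos.
case: (Inv_enum Hpd) => -[H1 H2 H3] Hsz.
move: H1 H2 H3 Hsz.
set st := foldl _ _ _ => H1 H2 H3 Hsz.
have [o [Ho Hao Hsum]] := H3 (size st.1).-1 ltac:(lia).
have := @count_arg n p d tau st.2 o (size st.1).-1 Hs Hf.
rewrite Hsz prednK //; apply => k' Hk'.
have := Hsum k' ltac:(by rewrite Hsz); rewrite big_enum_cond /=.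
by [].
Qed.

Lemma id_feasible n (p d : 'I_n -> nat) : (forall j, p j <= d j) ->
  feasible p d [ffun j => j] /\ machines_used [ffun j : 'I_n => j] = n.
Proof.
move=> Hpd; split.
  apply/forallP => j; rewrite /completion (big_pred1 j) ?ffunE // => k.
  rewrite /= !ffunE; case: eqP => [->|]; first by rewrite leqnn.
  by rewrite andbF.
rewrite /machines_used (eq_imset (g := id)); last by move=> x; rewrite ffunE.
by rewrite card_imset // card_ord.
Qed.

Lemma opt_attained n (p d : 'I_n -> nat) : (forall j, p j <= d j) ->
  exists tau, feasible p d tau /\ machines_used tau = OPT p d.
Proof.
move=> Hpd; have [Hf Hm] := id_feasible Hpd.
rewrite /OPT; apply: (big_ind (fun x => exists tau, feasible p d tau /\ machines_used tau = x)).
- by exists [ffun j => j].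
- move=> x y [t1 [F1 E1]] [t2 [F2 E2]]; rewrite /minn; case: ifP => _.
    by exists t1.
  by exists t2.
- by move=> tau Hf'; exists tau.
Qed.

Lemma opt_le_n n (p d : 'I_n -> nat) : OPT p d <= n.
Proof.
rewrite /OPT; apply: (big_ind (fun x => x <= n)) => //.
  by move=> x y Hx Hy; rewrite geq_min Hx.
move=> tau _; rewrite /machines_used.
by apply: leq_trans (max_card _) _; rewrite card_ord.
Qed.

Lemma general n (p d : 'I_n -> nat) :
  (forall j, 0 < p j) -> (forall j, p j <= d j) ->
  (forall i j : 'I_n, i <= j -> d i - p i <= d j - p j) ->
  (2 <= OPT p d -> FF p d < 2 * OPT p d) /\ (OPT p d = 1 -> FF p d = 1).
Proof.
move=> _ Hpd Hs.
have [tau [Hf Htau]] := opt_attained Hpd.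
split.
  move=> H2; case: (posnP (FF p d)) => [->|Hp]; first lia.
  by rewrite -Htau; apply: core.
move=> H1.
have Hn : 0 < n by have := opt_le_n p d; lia.
have Hpos : 0 < FF p d.
  case: (Inv_enum Hpd) => -[_ H2 _] Hsz; rewrite -Hsz.
  have := H2 (Ordinal Hn) (mem_enum _ _); lia.
have := core Hpd Hs Hf Hpos; rewrite Htau H1; lia.
Qed.

Lemma nseqSr T n (x : T) : nseq n.+1 x = rcons (nseq n x) x.
Proof. by elim: n => //= n <-. Qed.

Lemma set_nth_last (s : seq nat) x y : set_nth 0 (rcons s x) (size s) y = rcons s y.
Proof. by elim: s => //= a s ->. Qed.

Definition tg k := fun (L : seq nat) (j : nat) => ff_step L (tight_p k j) (tight_d k j).

Lemma ff_first k i : i <= k -> foldl (tg k) [::] (iota 0 (2 * i)) = nseq i k.+1.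
Proof.
elim: i => [|i IH] Hi //.
rewrite (_ : 2 * i.+1 = 2 * i + 2); last lia.
rewrite iotaD foldl_cat IH; last lia.
rewrite /= add0n /tg /ff_step.
have Hod : odd (2 * i) = false by rewrite mul2n odd_double.
have Hp1 : tight_p k (2 * i) = k by rewrite /tight_p Hod ifT //; lia.
have Hd1 : tight_d k (2 * i) = 2 * k by rewrite /tight_d Hod ifT //; lia.
have Hp2 : tight_p k (2 * i).+1 = 1 by rewrite /tight_p /= Hod ifT //; lia.
have Hd2 : tight_d k (2 * i).+1 = k.+1 by rewrite /tight_d /= Hod ifT //; lia.
have Hf1 : find (fun l => l + k <= 2 * k) (nseq i k.+1) = i.
  rewrite hasNfind ?size_nseq // has_nseq; apply/negP => /andP [_]; lia.
rewrite Hp1 Hd1 Hf1 size_nseq ltnn Hp2 Hd2.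
have Hf2 : find (fun l => l + 1 <= k.+1) (rcons (nseq i k.+1) k) = i.
  rewrite -cats1 find_cat has_nseq size_nseq.
  rewrite (_ : (0 < i) && (k.+1 + 1 <= k.+1) = false); last lia.
  by rewrite /= (_ : k + 1 <= k.+1) ?addn0 //; lia.
rewrite Hf2 size_rcons size_nseq ltnSn nth_rcons size_nseq ltnn eqxx.
rewrite (_ : k + 1 = k.+1); last lia.
have -> : set_nth 0 (rcons (nseq i k.+1) k) i k.+1 = rcons (nseq i k.+1) k.+1.
  by rewrite -{2}(size_nseq i k.+1) set_nth_last.
by rewrite -nseqSr.
Qed.

Lemma ff_second k (l : seq nat) r : (forall x, x \in l -> 2 * k <= x) ->
  foldl (tg k) (nseq r k.+1) l = nseq (r + size l) k.+1.
Proof.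
elim: l r => [|x l IH] r Hl /=; first by rewrite addn0.
have Hx : 2 * k <= x by apply: Hl; rewrite inE eqxx.
have Hp : tight_p k x = k.+1 by rewrite /tight_p ifF //; lia.
have Hd : tight_d k x = 2 * k + 1 by rewrite /tight_d ifF //; lia.
have -> : tg k (nseq r k.+1) x = nseq r.+1 k.+1.
  rewrite /tg /ff_step Hp Hd hasNfind ?size_nseq ?ltnn ?nseqSr //.
  by rewrite has_nseq; apply/negP => /andP [_]; lia.
rewrite IH; first by rewrite addSnnS.
move=> y Hy; apply: Hl; by rewrite inE Hy orbT.
Qed.

Lemma foldl_map' (T U R : Type) (f : R -> U -> R) (h : T -> U) z s :
  foldl f z (map h s) = foldl (fun z x => f z (h x)) z s.
Proof. by elim: s z => //= x s IH z; rewrite IH. Qed.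

Lemma FF_tight k : 1 <= k ->
  FF (fun j : 'I_(3 * k + 1) => tight_p k j) (fun j => tight_d k j) = 2 * k + 1.
Proof.
move=> Hk; rewrite /FF /ff_loads.
rewrite (_ : foldl _ _ _ = foldl (tg k) [::] (map val (enum 'I_(3 * k + 1)))); last first.
  by rewrite foldl_map'.
rewrite val_enum_ord (_ : 3 * k + 1 = 2 * k + (k + 1)); last lia.
rewrite iotaD foldl_cat ff_first // ff_second ?size_iota ?size_nseq; first lia.
by move=> x; rewrite mem_iota; lia.
Qed.

Definition tf k j := if j < 2 * k then (if odd j then k else j %/ 2) else j - 2 * k.

Lemma tf_le k j : j < 3 * k + 1 -> tf k j <= k.
Proof. rewrite /tf; case: ifP => H; first case: (odd j); lia. Qed.

Lemma tf_lt k j : j < 3 * k + 1 -> tf k j < 3 * k + 1.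
Proof. move=> H; have := tf_le H; lia. Qed.

Definition ttau k : {ffun 'I_(3 * k + 1) -> 'I_(3 * k + 1)} :=
  [ffun j => Ordinal (tf_lt (ltn_ord j))].

Lemma comp_nat k (j : 'I_(3 * k + 1)) :
  completion (fun j : 'I_(3 * k + 1) => tight_p k j) (ttau k) j =
  \sum_(0 <= i < 3 * k + 1) (if (i <= j) && (tf k i == tf k j) then tight_p k i else 0).
Proof.
rewrite /completion big_mkcond big_mkord; apply: eq_bigr => i _.
by rewrite !ffunE -val_eqE.
Qed.

Lemma sum_ind N a c : \sum_(0 <= i < N) (if i == a then c else 0) = if a < N then c else 0.
Proof.
elim: N => [|N IH]; first by rewrite big_geq.
rewrite big_nat_recr //= IH.
by case: (boolP (a < N)) => ?; case: (boolP (N == a)) => ?; case: (boolP (a < N.+1)) => ?; lia.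
Qed.

Lemma sum_odd N k : \sum_(0 <= i < N) (if odd i && (i < 2 * k) then 1 else 0) = (minn N (2 * k)) %/ 2.
Proof.
elim: N => [|N IH]; first by rewrite big_geq // min0n div0n.
rewrite big_nat_recr //= IH; move: (modn2 N); case: (odd N) => /= HN; case: (boolP (N < 2 * k)) => ? /=; lia.
Qed.

Ltac crush := repeat (match goal with |- context [if ?b then _ else _] => case: (boolP b) => ? end); try lia.

Lemma ttau_feasible k : 1 <= k ->
  feasible (fun j : 'I_(3 * k + 1) => tight_p k j) (fun j => tight_d k j) (ttau k).
Proof.
move=> Hk; apply/forallP => j; rewrite comp_nat /=.
have HJ := ltn_ord j; move: (nat_of_ord j) HJ => J HJ.
set h := fun i => if (i <= J) && (tf k i == tf k J) then tight_p k i else 0.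
rewrite -/(h _).
have key : forall b : nat -> nat, (forall i, i < 3 * k + 1 -> h i <= b i) ->
    \sum_(0 <= i < 3 * k + 1) h i <= \sum_(0 <= i < 3 * k + 1) b i.
  move=> b Hb; rewrite big_nat_cond [X in _ <= X]big_nat_cond.
  by apply: leq_sum => i /andP [/andP [_ Hi] _]; exact: Hb.
move: (modn2 J) => MJ.
case: (ltnP J (2 * k)) => HJ2.
  move: MJ; case OJ : (odd J) => MJ.
  - apply: leq_trans (key (fun i => if odd i && (i < 2 * k) then 1 else 0) _) _.
      move=> i Hi; rewrite /h /tf /tight_p HJ2 OJ.
      move: (modn2 i); case: (odd i) => Mi; case: (boolP (i < 2 * k)) => ?; crush.
    rewrite sum_odd /tight_d HJ2 OJ /=; lia.
  - apply: leq_trans (key (fun i => if i == J then k else 0) _) _.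
      move=> i Hi; rewrite /h /tf /tight_p HJ2 OJ.
      move: (modn2 i); case: (odd i) => Mi; case: (boolP (i < 2 * k)) => ?; crush.
    rewrite sum_ind /tight_d HJ2 OJ /=; crush.
have HJ2' : (J < 2 * k) = false by lia.
case: (ltnP J (3 * k)) => HJ3.
  apply: leq_trans (key (fun i => (if i == 2 * (J - 2 * k) then k else 0) + (if i == J then k.+1 else 0)) _) _.
    move=> i Hi; rewrite /h /tf /tight_p HJ2'.
    move: (modn2 i); case: (odd i) => Mi; case: (boolP (i < 2 * k)) => ?; crush.
  rewrite big_split /= !sum_ind /tight_d HJ2' /=; crush.
apply: leq_trans (key (fun i => (if odd i && (i < 2 * k) then 1 else 0) + (if i == J then k.+1 else 0)) _) _.
  move=> i Hi; rewrite /h /tf /tight_p HJ2'.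
  move: (modn2 i); case: (odd i) => Mi; case: (boolP (i < 2 * k)) => ?; crush.
rewrite big_split /= sum_odd sum_ind /tight_d HJ2' /=; crush.
Qed.

Lemma ttau_used k : machines_used (ttau k) <= k + 1.
Proof.
have Hle : k + 1 <= 3 * k + 1 by lia.
rewrite /machines_used.
apply: (@leq_trans #|[set widen_ord Hle i | i in 'I_(k + 1)]|); last first.
  by apply: leq_trans (leq_imset_card _ _) _; rewrite card_ord.
apply: subset_leq_card; apply/subsetP => x /imsetP [j _ ->].
have Hj : tf k j < k + 1 by have := tf_le (ltn_ord j); lia.
apply/imsetP; exists (Ordinal Hj) => //.
by apply: val_inj; rewrite /= ffunE.
Qed.

Lemma lower_used k (tau : {ffun 'I_(3 * k + 1) -> 'I_(3 * k + 1)}) :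
  feasible (fun j : 'I_(3 * k + 1) => tight_p k j) (fun j => tight_d k j) tau ->
  k + 1 <= machines_used tau.
Proof.
move=> Hf.
have Hc : forall t : 'I_(k + 1), 2 * k + t < 3 * k + 1 by move=> t; have := ltn_ord t; lia.
pose c := fun t : 'I_(k + 1) => Ordinal (Hc t).
have Hp : forall t, tight_p k (c t) = k.+1 by move=> t; rewrite /tight_p /= ifF //; lia.
have Hinj : injective (fun t => tau (c t)).
  have H2 : forall t1 t2 : 'I_(k + 1), t1 < t2 -> tau (c t1) = tau (c t2) -> False.
    move=> t1 t2 Hlt Heq.
    have := (forallP Hf) (c t2); rewrite /completion (bigD1 (c t2)) /=; last by rewrite leqnn eqxx.
    rewrite (bigD1 (c t1)) /=; last first.
      rewrite Heq eqxx andbT -val_eqE /=; apply/andP; split; lia.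
    rewrite !Hp /tight_d /= ifF; lia.
  move=> t1 t2 /= Heq; case: (ltngtP t1 t2) => H.
  - by case: (H2 _ _ H Heq).
  - by case: (H2 _ _ H (esym Heq)).
  - exact: val_inj.
rewrite /machines_used.
apply: (@leq_trans #|[set tau (c t) | t in 'I_(k + 1)]|).
  by rewrite card_imset // card_ord.
apply: subset_leq_card; apply/subsetP => x /imsetP [t _ ->]; exact: imset_f.
Qed.

Lemma bigmin_le (T : eqType) (r : seq T) (P : pred T) (F : T -> nat) n x :
  x \in r -> P x -> \big[minn/n]_(t <- r | P t) F t <= F x.
Proof.
elim: r => // y r IH; rewrite inE big_cons => /orP [/eqP ->|Hr] Px.
  by rewrite Px geq_minl.
case: (P y); last exact: IH.
by apply: leq_trans (geq_minr _ _) (IH Hr Px).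
Qed.

Lemma OPT_tight k : 1 <= k ->
  OPT (fun j : 'I_(3 * k + 1) => tight_p k j) (fun j => tight_d k j) = k + 1.
Proof.
move=> Hk; apply/eqP; rewrite eqn_leq; apply/andP; split.
  apply: leq_trans (ttau_used k).
  by apply: bigmin_le; [rewrite mem_index_enum | exact: ttau_feasible].
rewrite /OPT; apply: (big_ind (fun x => k + 1 <= x)).
- lia.
- by move=> x y Hx Hy; rewrite leq_min Hx.
- by move=> tau Hf; apply: lower_used.
Qed.

Theorem mainTheorem6 :
  (forall (n : nat) (p d : 'I_n -> nat),
     (forall j, 0 < p j) ->
     (forall j, p j <= d j) ->
     (forall i j : 'I_n, i <= j -> d i - p i <= d j - p j) ->
     (2 <= OPT p d -> FF p d < 2 * OPT p d) /\
     (OPT p d = 1 -> FF p d = 1)) /\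
  (forall k : nat, 1 <= k ->
     OPT (fun j : 'I_(3 * k + 1) => tight_p k j) (fun j => tight_d k j) = k + 1 /\
     FF (fun j : 'I_(3 * k + 1) => tight_p k j) (fun j => tight_d k j) = 2 * k + 1).
Proof.
split.
  move=> n p d H1 H2 H3; exact: general.
by move=> k Hk; split; [apply: OPT_tight | apply: FF_tight].
Qed.
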